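(* Let $p$ be a prime and let $n\ge 1$ be an integer. Let $A$ be a commutative ring with $p^nA=0$, and let $F\colon A\to A$ be a lifting of Frobenius, i.e. a ring endomorphism with $F(x)\equiv x^p \pmod{pA}$ for all $x\in A$. Let $I\subseteq A$ be an ideal such that $F(I)\subseteq I^p+p^mA$ for some integer $1\le m\le n$. Then \[ F(I^a)\subseteq I^a \quad\text{for every integer}\quad a\ \ge\ \frac{p}{p-1}\left(\left\lceil \frac{n}{m}\right\rceil-1\right). \] In particular, if $p^2A=0$, then $F(I^2)\subseteq I^2$ for every ideal $I\subseteq A$.
   Context: The condition $F(I)\subseteq I^p+pA$ (the case $m=1$) holds automatically for any ideal $I$ and any lifting of Frobenius $F$. *)

(* Defs.v *)
From mathcomp Require Import all_boot all_order all_algebra.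
Set Implicit Arguments. Unset Strict Implicit. Unset Printing Implicit Defensive.
Import Order.TTheory GRing.Theory Num.Theory.
Local Open Scope ring_scope.

Section Ideals.
Variable A : comPzRingType.

Definition is_ideal (I : A -> Prop) : Prop :=
  [/\ I 0, (forall x y, I x -> I y -> I (x + y)) & (forall r x, I x -> I (r * x))].

Definition ideal_gen (S : A -> Prop) : A -> Prop :=
  fun x => forall J, is_ideal J -> (forall y, S y -> J y) -> J x.

Definition ideal_mul (I J : A -> Prop) : A -> Prop :=
  ideal_gen (fun z => exists x y, [/\ I x, J y & z = x * y]).

Fixpoint ideal_pow (I : A -> Prop) (a : nat) : A -> Prop :=
  match a with
  | 0%N => fun _ => True
  | a'.+1 => ideal_mul (ideal_pow I a') I
  end.

Definition ideal_add (I J : A -> Prop) : A -> Prop :=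
  fun z => exists x y, [/\ I x, J y & z = x + y].

Definition ideal_scal (c : A) : A -> Prop := fun z => exists y, z = c * y.

Definition frobenius_lift (p : nat) (F : A -> A) : Prop :=
  forall x, exists y, F x = x ^+ p + p%:R * y.

End Ideals.

(* Main.v *)
Require Import Defs.
From mathcomp Require Import all_boot all_order all_algebra.
From mathcomp Require Import zify.
Import Order.TTheory GRing.Theory Num.Theory.
Local Open Scope ring_scope.

Section Aux.
Variable A : comPzRingType.
Implicit Types (S J T I : A -> Prop).

Lemma gen_ideal S : is_ideal (ideal_gen S).
Proof.
split.
- by move=> J [].
- move=> x y Hx Hy J HJ HS; case: (HJ) => _ Hadd _; apply: Hadd; [exact: Hx | exact: Hy].
- move=> r x Hx J HJ HS; case: (HJ) => _ _ Hm; apply: Hm; exact: Hx.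
Qed.

Lemma gen_incl S x : S x -> ideal_gen S x.
Proof. by move=> Sx J _ H; apply: H. Qed.

Lemma gen_min S J x : is_ideal J -> (forall y, S y -> J y) -> ideal_gen S x -> J x.
Proof. by move=> HJ HS Hx; apply: Hx. Qed.

Lemma pow_ideal I a : is_ideal (ideal_pow I a).
Proof. case: a => [|a] /=; [by split | exact: gen_ideal]. Qed.

Lemma ideal0 J : is_ideal J -> J 0.
Proof. by case. Qed.

Lemma idealM J r x : is_ideal J -> J x -> J (r * x).
Proof. by case=> _ _ H; apply: H. Qed.

Lemma idealMr J r x : is_ideal J -> J x -> J (x * r).
Proof. by move=> HJ Hx; rewrite mulrC; apply: idealM. Qed.

Lemma idealD J x y : is_ideal J -> J x -> J y -> J (x + y).
Proof. by case=> _ H _; apply: H. Qed.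

Lemma gen_mul S1 S2 T x y : is_ideal T ->
  (forall u v, S1 u -> S2 v -> T (u * v)) ->
  ideal_gen S1 x -> ideal_gen S2 y -> T (x * y).
Proof.
move=> HT H Hx.
pose J := fun x => forall y, ideal_gen S2 y -> T (x * y).
apply: (@gen_min S1 J x) => //.
- split.
  + by move=> z _; rewrite mul0r; apply: ideal0.
  + by move=> a b Ha Hb z Hz; rewrite mulrDl; apply: idealD => //; [exact: Ha | exact: Hb].
  + by move=> r a Ha z Hz; rewrite -mulrA; apply: idealM => //; exact: Ha.
- move=> u Su z Hz.
  apply: (@gen_min S2 (fun z => T (u * z)) z) => //.
  split.
  + by rewrite mulr0; apply: ideal0.
  + by move=> a b Ha Hb; rewrite mulrDr; apply: idealD.
  + by move=> r a Ha; rewrite mulrCA; apply: idealM.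
  + by move=> v Sv; apply: H.
Qed.

Lemma pow_mul I i j x y : ideal_pow I i x -> ideal_pow I j y -> ideal_pow I (i + j) (x * y).
Proof.
elim: j y => [|j IH] y Hx Hy.
  by rewrite addn0; apply: (idealMr _ _ _ (pow_ideal I i) Hx).
rewrite addnS.
have HP := pow_ideal I (i + j).+1.
have HJ : is_ideal (fun y => ideal_pow I (i + j).+1 (x * y)).
  split.
  + by rewrite mulr0; apply: (ideal0 _ HP).
  + by move=> a b Ha Hb; rewrite mulrDr; apply: (idealD _ _ _ HP).
  + by move=> r a Ha; rewrite mulrCA; apply: (idealM _ _ _ HP).
apply: (gen_min _ _ _ HJ _ Hy).
move=> z [u [v [Hu Hv ->]]].
rewrite mulrA; apply: gen_incl; exists (x * u), v; split => //.
exact: IH.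
Qed.

Lemma pow_S I b x : ideal_pow I b.+1 x -> ideal_pow I b x.
Proof.
move=> /= Hx; apply: (gen_min _ _ _ (pow_ideal I b) _ Hx).
by move=> z [u [v [Hu Hv ->]]]; apply: idealMr => //; apply: pow_ideal.
Qed.

Lemma pow_anti I i j x : (i <= j)%N -> ideal_pow I j x -> ideal_pow I i x.
Proof.
elim: j => [|j IH]; first by rewrite leqn0 => /eqP ->.
rewrite leq_eqVlt => /orP [/eqP -> //| Hij] Hx.
by apply: IH => //; apply: pow_S.
Qed.

Lemma pow_exp I x b : I x -> ideal_pow I b (x ^+ b).
Proof.
move=> Ix; elim: b => [|b IH] //=.
rewrite exprSr; apply: gen_incl; by exists (x ^+ b), x.
Qed.

Lemma main_lemma (F : {rmorphism A -> A}) (p n m k a : nat) I :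
  (0 < p)%N -> is_ideal I -> (p%:R : A) ^+ n = 0 -> (n <= m * k)%N ->
  (p * (k - 1) <= (p - 1) * a)%N ->
  (forall x, I x -> ideal_add (ideal_pow I p) (ideal_scal ((p%:R : A) ^+ m)) (F x)) ->
  forall x, ideal_pow I a x -> ideal_pow I a (F x).
Proof.
move=> Hp0 HI Hpn Hnk Hpa HF.
pose G b := ideal_gen (fun z => exists s y, [/\ (s <= b)%N,
   ideal_pow I (p * (b - s)) y & z = (p%:R : A) ^+ (m * s) * y]).
have HG : forall b x, ideal_pow I b x -> G b (F x).
  elim=> [|b IH] x Hx.
    apply: gen_incl; exists 0%N, (F x); split => //.
      by rewrite subnn muln0.
    by rewrite muln0 expr0 mul1r.
  have HGb : is_ideal (G b.+1) by apply: gen_ideal.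
  have HJ : is_ideal (fun x => G b.+1 (F x)).
    split.
    + by rewrite rmorph0; apply: (ideal0 _ HGb).
    + by move=> u v Hu Hv; rewrite rmorphD; apply: (idealD _ _ _ HGb).
    + by move=> r u Hu; rewrite rmorphM; apply: (idealM _ _ _ HGb).
  apply: (gen_min _ _ _ HJ _ Hx).
  move=> z [u [v [Hu Hv ->]]]; rewrite rmorphM.
    have Gv : G 1%N (F v).
      have [y1 [y2 [Hy1 [w ->] ->]]] := HF v Hv.
      apply: (idealD _ _ _ (gen_ideal _)).
      + apply: gen_incl; exists 0%N, y1; split => //.
        * by rewrite subn0 muln1.
        * by rewrite muln0 expr0 mul1r.
      + by apply: gen_incl; exists 1%N, w; split; rewrite ?subnn ?muln0 ?muln1.
    apply: (gen_mul _ _ _ _ _ (gen_ideal _) _ (IH u Hu) Gv).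
    move=> u' v' [s [y [Hs Hy ->]]] [t [y' [Ht Hy' ->]]].
    apply: gen_incl; exists (s + t)%N, (y * y'); split.
    + by rewrite -addn1 leq_add.
    + have -> : (p * (b.+1 - (s + t)) = p * (b - s) + p * (1 - t))%N.
        rewrite -mulnDr; congr (p * _)%N.
        move: Ht; rewrite leq_eqVlt ltnS leqn0 => /orP [] /eqP ->.
          by rewrite subnn addn0 addn1 subSS.
        by rewrite addn0 subn0 addn1 subSn.
      exact: pow_mul.
    + by rewrite mulnDr exprD; rewrite mulrACA.
move=> x Hx.
apply: (gen_min _ _ _ (pow_ideal I a) _ (HG a x Hx)).
move=> z [s [y [Hs Hy ->]]].
case: (leqP k s) => Hks.
  have -> : (p%:R : A) ^+ (m * s) = 0.
    have Hle : (n <= m * s)%N by apply: (leq_trans Hnk); rewrite leq_mul2l Hks orbT.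
    by rewrite -(subnK Hle) exprD Hpn mulr0.
  by rewrite mul0r; apply: (ideal0 _ (pow_ideal I a)).
apply: (idealM _ _ _ (pow_ideal I a)).
apply: (pow_anti _ _ _ _ _ Hy).
have Hs1 : (s <= k - 1)%N by rewrite leq_subRL ?add1n // (leq_ltn_trans _ Hks).
have : (p * s <= (p - 1) * a)%N by apply: leq_trans Hpa; rewrite leq_mul2l Hs1 orbT.
rewrite mulnBl mul1n => H.
have Hps : (p * s <= p * a)%N by rewrite leq_mul2l Hs orbT.
have Hpa' : (a <= p * a)%N by rewrite leq_pmull.
rewrite mulnBr; lia.
Qed.

End Aux.

Theorem lemma1p1 (p n : nat) (A : comPzRingType) (F : {rmorphism A -> A}) :
  prime p -> (1 <= n)%N ->
  (p%:R : A) ^+ n = 0 ->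
  frobenius_lift p F ->
  (forall (I : A -> Prop) (m : nat),
      is_ideal I -> (1 <= m <= n)%N ->
      (forall x, I x -> ideal_add (ideal_pow I p) (ideal_scal ((p%:R : A) ^+ m)) (F x)) ->
      forall a : nat,
        (p%:Q / (p%:Q - 1)) * ((Num.ceil (n%:Q / m%:Q))%:~R - 1) <= a%:Q ->
        forall x, ideal_pow I a x -> ideal_pow I a (F x))
  /\
  ((p%:R : A) ^+ 2 = 0 ->
   forall I : A -> Prop, is_ideal I ->
     forall x, ideal_pow I 2 x -> ideal_pow I 2 (F x)).
Proof.
move=> Hp Hn Hpn HF; have Hp2 := prime_gt1 Hp; have Hp0 := prime_gt0 Hp.
split.
- move=> I m HI /andP[Hm1 Hmn] HFI a Ha x Hx.
  rewrite -!pmulrn in Ha *.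
  have Hm0 : (0 < m%:Q) by rewrite -pmulrn ltr0n.
  have Hc0 : (0 <= Num.ceil (n%:Q / m%:Q))%R.
    by rewrite ceil_ge0 (@lt_le_trans _ _ 0) // divr_ge0.
  have [k Hk] : exists k : nat, Num.ceil (n%:Q / m%:Q) = k%:Z.
    by exists `|Num.ceil (n%:Q / m%:Q)|%N; rewrite gez0_abs.
  rewrite Hk -!pmulrn in Ha.
  have Hnk : (n <= m * k)%N.
    have := ceil_ge (n%:Q / m%:Q); rewrite Hk -!pmulrn ler_pdivrMr //.
    by rewrite -natrM ler_nat mulnC.
  have Hpa : (p * (k - 1) <= (p - 1) * a)%N.
    case: k {Hk Hnk} Ha => [|k] Ha; first by rewrite sub0n muln0.
    rewrite subSS subn0.
    rewrite -addn1 natrD addrK mulrAC ler_pdivrMr in Ha; last first.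
      by rewrite subr_gt0 ltr1n.
    rewrite -(natrB _ (ltnW Hp2)) -!natrM ler_nat mulnC in Ha; by rewrite mulnC (mulnC (p - 1)%N).
  exact: (@main_lemma A F p n m k a I Hp0 HI Hpn Hnk Hpa HFI x Hx).
- move=> Hp2' I HI x Hx.
  apply: (@main_lemma A F p 2 1 2 2 I Hp0 HI Hp2' _ _ _ x Hx) => //.
    lia.
  move=> y Iy; have [z ->] := HF y.
  exists (y ^+ p), (p%:R * z); split => //.
    exact: pow_exp.
  by exists z; rewrite expr1.
Qed.
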